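(* Let $\mathbf{L}$ be a distributive lattice, $n\ge1$ an integer, $F$ an $n$-filter on $\mathbf{L}$ and $I$ an ideal of $\mathbf{L}$ with $F\cap I=\emptyset$. Then there is a prime $n$-filter $G\supseteq F$ on $\mathbf{L}$ with $G\cap I=\emptyset$.
   Context: For a set $X$, $Y\subseteq_n X$ means $Y$ is a non-empty subset of $X$ with $|Y|\le n$. An $n$-filter on a lattice is an upset $F$ such that for every non-empty finite $X\subseteq F$: if $\bigwedge Y\in F$ for every $Y\subseteq_n X$ then $\bigwedge X\in F$. A prime $n$-filter is an $n$-filter $F$ such that $a\vee b\in F$ implies $a\in F$ or $b\in F$. An ideal is a downset closed under binary joins (possibly empty). *)

(* Defs.v *)
From mathcomp Require Import all_boot all_order.
Set Implicit Arguments. Unset Strict Implicit. Unset Printing Implicit Defensive.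
Import Order.LTheory.
Local Open Scope order_scope.

Section NFilters.
Context {disp : Order.disp_t} {L : latticeType disp}.

(* Meet of the non-empty finite family {x} ∪ (elements of s). Since meet is
   idempotent, commutative and associative, this is the meet of the underlying set. *)
Definition bigmeet (x : L) (s : seq L) : L := foldr Order.meet x s.

Definition upset (F : L -> Prop) : Prop :=
  forall a b : L, a <= b -> F a -> F b.

(* n-filter: upset F such that for every non-empty finite X ⊆ F
   (X = set of elements of x :: s), if ⋀Y ∈ F for every non-empty Y ⊆ X with
   |Y| <= n (Y = set of elements of y :: t with size (y :: t) <= n),
   then ⋀X ∈ F. *)
Definition nfilter (n : nat) (F : L -> Prop) : Prop :=
  upset F /\
  forall (x : L) (s : seq L),
    (forall z, z \in x :: s -> F z) ->
    (forall (y : L) (t : seq L),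
        (forall z, z \in y :: t -> z \in x :: s) ->
        (size (y :: t) <= n)%N ->
        F (bigmeet y t)) ->
    F (bigmeet x s).

Definition prime_nfilter (n : nat) (F : L -> Prop) : Prop :=
  nfilter n F /\ forall a b : L, F (a `|` b) -> F a \/ F b.

(* ideal: downset closed under binary joins (possibly empty) *)
Definition ideal (I : L -> Prop) : Prop :=
  (forall a b : L, a <= b -> I b -> I a) /\
  (forall a b : L, I a -> I b -> I (a `|` b)).

End NFilters.

(* Main.v *)
Require Import Defs.
From mathcomp Require Import all_boot all_order.
From mathcomp Require Import boolp classical_sets.
From Stdlib Require Import Classical.
Import Order.LTheory.
Local Open Scope order_scope.

Section Aux.
Context {disp : Order.disp_t} {L : distrLatticeType disp}.

Lemma bigmeet_joinr (c x : L) s :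
  bigmeet x s `|` c = bigmeet (x `|` c) (map (fun z => z `|` c) s).
Proof. elim: s => [//|a s IH] /=. by rewrite joinIl IH. Qed.

Lemma lift_seq (f : L -> L) u w :
  (forall z, z \in w -> z \in map f u) ->
  exists w', map f w' = w /\ (forall z, z \in w' -> z \in u).
Proof.
elim: w => [|a w IH] H; first by exists [::].
have [w' [E1 E2]] : exists w', map f w' = w /\ (forall z, z \in w' -> z \in u).
  by apply: IH => z zw; apply: H; rewrite inE zw orbT.
have /mapP [a' a'u ->] : a \in map f u by apply: H; rewrite inE eqxx.
exists (a' :: w'); split; first by rewrite /= E1.
by move=> z; rewrite inE => /orP [/eqP ->|]; [| apply: E2].
Qed.

Lemma shift_nfilter n (G : L -> Prop) c :
  nfilter n G -> nfilter n (fun z => G (z `|` c)).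
Proof.
move=> [Gup Gm]; split.
  move=> a b ab; apply: Gup; by rewrite leUx lexUl // lexUr.
move=> x s Hx Hy; rewrite bigmeet_joinr.
apply: Gm.
  by move=> z /(@mapP _ _ (fun z => z `|` c) (x :: s)) [z0 z0in ->]; apply: Hx.
move=> y t Hyt Hsz.
have [w' [E1 E2]] := @lift_seq (fun z => z `|` c) (x :: s) (y :: t) Hyt.
case: w' E1 E2 => [//|y' t'] [E1 E2] E3.
subst y t; rewrite -bigmeet_joinr; apply: Hy => //.
by rewrite /= size_map in Hsz.
Qed.

Fixpoint enumL (k : nat) (u : seq L) : seq (seq L) :=
  match k with
  | 0 => [:: [::]]
  | k'.+1 => [::] :: [seq a :: w | a <- u, w <- enumL k' u]
  end.

Lemma enumL_complete k u w : (size w <= k)%N -> (forall z, z \in w -> z \in u) ->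
  w \in enumL k u.
Proof.
elim: k w => [|k IH] [|a w] //= Hs Hw.
rewrite inE; apply/orP; right; apply: allpairs_f.
  by apply: Hw; rewrite inE eqxx.
by apply: IH => // z zw; apply: Hw; rewrite inE zw orbT.
Qed.

Lemma enumL_sound k u w : w \in enumL k u ->
  (size w <= k)%N /\ (forall z, z \in w -> z \in u).
Proof.
elim: k w => [|k IH] w /=; first by rewrite inE => /eqP ->.
rewrite inE => /orP [/eqP -> //|/allpairsP [[a w'] [/= au w'in ->]]].
have [H1 H2] := IH _ w'in; split => // z; rewrite inE => /orP [/eqP -> //|].
exact: H2.
Qed.

Lemma chain_nfilter n (Q : (L -> Prop) -> Prop) :
  (1 <= n)%N ->
  (exists G, Q G) ->
  (forall G1 G2, Q G1 -> Q G2 -> (forall x, G1 x -> G2 x) \/ (forall x, G2 x -> G1 x)) ->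
  (forall G, Q G -> nfilter n G) ->
  nfilter n (fun x => exists G, Q G /\ G x).
Proof.
move=> n1 [G0 QG0] tot nf; split.
  move=> a b ab [G [QG Ga]]; exists G; split => //.
  by apply: (proj1 (nf _ QG)) ab Ga.
move=> x s Hx Hy.
pose req (w : seq L) (G : L -> Prop) :=
  match w with [::] => True | y :: t => G (bigmeet y t) end.
have gather : forall ps : seq (seq L), (forall w, w \in ps ->
    (size w <= n)%N /\ (forall z, z \in w -> z \in x :: s)) ->
    exists G, Q G /\ forall w, w \in ps -> req w G.
  elim => [|p ps IH] H; first by exists G0.
  have [G [QG HG]] := IH (fun w wi => H w ltac:(by rewrite inE wi orbT)).
  have [Hs Hm] := H p ltac:(by rewrite inE eqxx).
  have [G' [QG' HG']] : exists G', Q G' /\ req p G'.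
    case: p Hs Hm {H} => [|y t] Hs Hm; first by exists G0.
    by have [G' [? ?]] := Hy y t Hm Hs; exists G'.
  have mono : forall (A B : L -> Prop) w, (forall x, A x -> B x) -> req w A -> req w B.
    by move=> A B [|y t] AB //=; apply: AB.
  have [AB|BA] := tot _ _ QG QG'.
    exists G'; split => // w; rewrite inE => /orP [/eqP -> //|wi].
    by apply: (mono G) => //; apply: HG.
  exists G; split => // w; rewrite inE => /orP [/eqP -> |wi]; last exact: HG.
  by apply: (mono G').
have [G [QG HG]] := gather (enumL n (x :: s)) (fun w wi => ltac:(exact: enumL_sound wi)).
exists G; split => //; apply: (proj2 (nf _ QG)).
  move=> z zin; apply: (HG [:: z]); apply: enumL_complete => //.
  by move=> z'; rewrite inE => /eqP ->.
move=> y t Hm Hs; apply: (HG (y :: t)); exact: enumL_complete.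
Qed.

End Aux.

Theorem mainTheorem8 (disp : Order.disp_t) (L : distrLatticeType disp) (n : nat)
  (F I : L -> Prop) :
  (1 <= n)%N -> nfilter n F -> ideal I ->
  (forall x : L, F x -> ~ I x) ->
  exists G : L -> Prop,
    prime_nfilter n G /\ (forall x : L, F x -> G x) /\ (forall x : L, G x -> ~ I x).
Proof.
move=> n1 nfF [Idown Ijoin] FI.
pose P (G : L -> Prop) := [/\ nfilter n G, (forall x, F x -> G x) & (forall x, G x -> ~ I x)].
pose T := {G : L -> Prop | P G}.
have PF : P F by split.
pose R (a b : T) := `[< forall x, sval a x -> sval b x >].
have [t tmax] : exists t : T, premaximal R t.
  apply: (@ZL_preorder T (exist _ F PF) R).
  - by move=> a; apply/asboolP.
  - by move=> a b c /asboolP ab /asboolP bc; apply/asboolP => x /ab /bc.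
  move=> A totA.
  pose Q (G : L -> Prop) := G = F \/ exists a, A a /\ sval a = G.
  pose U := fun x => exists G, Q G /\ G x.
  have QP : forall G, Q G -> P G.
    by move=> G [->|[a [_ <-]]] //; case: a.
  have PU : P U.
    split.
    - apply: chain_nfilter => //; first by exists F; left.
      + move=> G1 G2 [->|[a [Aa <-]]] [->|[b [Ab <-]]].
        * by left.
        * by left; case: b {Ab} => G [? ? ?].
        * by right; case: a {Aa} => G [? ? ?].
        * by case: (totA _ _ Aa Ab) => /asboolP; [left|right].
      + by move=> G /QP [].
    - by move=> x Fx; exists F; split => //; left.
    - by move=> x [G [/QP [_ _ H] Gx]]; apply: H.
  exists (exist _ U PU) => s As; apply/asboolP => x sx /=.
  by exists (sval s); split => //; right; exists s.
case: t tmax => G [nfG FG GI] tmax.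
have maxG : forall H, P H -> (forall x, G x -> H x) -> forall x, H x -> G x.
  move=> H PH GH.
  have /asboolP := tmax (exist _ H PH) (introT (asboolP _) GH).
  by [].
have shiftP : forall c, (forall x, G (x `|` c) -> ~ I x) -> P (fun x => G (x `|` c)).
  move=> c Hc; split => //.
  - exact: shift_nfilter.
  - move=> x Fx; apply: (proj1 nfG) (FG x Fx); exact: leUl.
have shiftG : forall c x, G x -> G (x `|` c).
  move=> c x Gx; apply: (proj1 nfG) Gx; exact: leUl.
exists G; split => //; split => // a b Gab.
case: (classic (G a)) => Ga; [by left|right].
case: (classic (forall x, G (x `|` b) -> ~ I x)) => Hb.
  exfalso; apply: Ga; apply: (maxG _ (shiftP b Hb) (shiftG b)).
  by [].
have [i [Gib Ii]] : exists i, G (i `|` b) /\ I i.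
  apply: NNPP => H; apply: Hb => x Gx Ix; apply: H; by exists x.
have Hi : forall x, G (x `|` i) -> ~ I x.
  by move=> x Gx Ix; apply: (GI _ Gx); apply: Ijoin.
apply: (maxG _ (shiftP i Hi) (shiftG i)).
by rewrite joinC.
Qed.
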